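(* In the social learning model, suppose the left tail of $G_-$ is convex and differentiable. Then the map $u_+(x)=x+D_+(x)$ is monotone increasing on $(x_1,\infty)$ for some $x_1\in\mathbb{R}$.
   Context: Social learning model. A state $\theta\in\{-1,+1\}$ is drawn with $\mathbb{P}(\theta=+1)=\mathbb{P}(\theta=-1)=1/2$. Agents $t=1,2,\dots$ receive private signals $s_t\in\mathbb{R}$ that are i.i.d. conditionally on $\theta$, with CDF $F_+$ if $\theta=+1$ and $F_-$ if $\theta=-1$; $F_+$ and $F_-$ are mutually absolutely continuous. Let $L_t=\log\frac{\mathbb{P}(\theta=+1\mid s_t)}{\mathbb{P}(\theta=-1\mid s_t)}$ be the private log-likelihood ratio, and let $G_+$, $G_-$ denote the CDFs of $L_t$ conditional on $\theta=+1$, $\theta=-1$ respectively. Signals are assumed unbounded: for every $M\in\mathbb{R}$, $\mathbb{P}(L_t>M)>0$ and $\mathbb{P}(L_t<-M)>0$. Agent $t$ observes $a_1,\dots,a_{t-1}$ and her own signal and chooses $a_t\in\{-1,+1\}$ (utility $1$ if $a_t=\theta$, else $0$). The public belief is $\mu_t=\mathbb{P}(\theta=+1\mid a_1,\dots,a_{t-1})$ and $\ell_t=\log\frac{\mu_t}{1-\mu_t}$ (so $\ell_1=0$). In equilibrium $a_t=+1$ iff $\ell_t+L_t>0$, and otherwise $a_t=-1$. Consequently $\ell_{t+1}=\ell_t+D_+(\ell_t)$ if $a_t=+1$ and $\ell_{t+1}=\ell_t+D_-(\ell_t)$ if $a_t=-1$, where $D_+(x)=\log\frac{1-G_+(-x)}{1-G_-(-x)}$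 and $D_-(x)=\log\frac{G_+(-x)}{G_-(-x)}$. We write $\mathbb{P}_+(\cdot)=\mathbb{P}(\cdot\mid\theta=+1)$ and $\mathbb{E}_+$ for the corresponding expectation. ''The left tail of $G_-$ is convex and differentiable'' means: there exists $x_0\in\mathbb{R}$ such that the restriction of $G_-$ to $(-\infty,x_0)$ is convex and differentiable. *)

(* Defs.v *)
From Stdlib Require Import Reals.
Open Scope R_scope.

Definition is_cdf (G : R -> R) : Prop :=
  (forall x y, x <= y -> G x <= G y) /\
  (forall x eps, 0 < eps -> exists delta, 0 < delta /\
       forall y, x <= y < x + delta -> Rabs (G y - G x) < eps) /\
  (forall eps, 0 < eps -> exists M, forall x, x <= M -> Rabs (G x) < eps) /\
  (forall eps, 0 < eps -> exists M, forall x, M <= x -> Rabs (G x - 1) < eps).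

(* (G_minus, G_plus) are the CDFs of the private log-likelihood ratio
   L = log dF_+/dF_- (prior 1/2) under theta = -1 and theta = +1.
   This is exactly the statement dG_+(t) = e^t dG_-(t) of measures on R,
   written out on half-open intervals (a,b]:
     G_+(b) - G_+(a) = \int_(a,b] e^t dG_-(t),
   which (e^t being increasing and continuous) is equivalent to the sandwich
     e^a (G_-(b)-G_-(a)) <= G_+(b)-G_+(a) <= e^b (G_-(b)-G_-(a)) for all a<b. *)
Definition llr_cdf_pair (Gm Gp : R -> R) : Prop :=
  is_cdf Gm /\ is_cdf Gp /\
  (forall a b, a < b ->
     exp a * (Gm b - Gm a) <= Gp b - Gp a /\
     Gp b - Gp a <= exp b * (Gm b - Gm a)).

(* Unbounded signals: P(L > M) > 0 and P(L < -M) > 0 for every M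
   (under either state; the two laws are mutually absolutely continuous). *)
Definition unbounded_signals (Gm : R -> R) : Prop :=
  forall M, 0 < 1 - Gm M /\ exists y, y < - M /\ 0 < Gm y.

Definition D_plus (Gm Gp : R -> R) (x : R) : R :=
  ln ((1 - Gp (- x)) / (1 - Gm (- x))).

Definition u_plus (Gm Gp : R -> R) (x : R) : R := x + D_plus Gm Gp x.

Definition left_tail_convex_differentiable (G : R -> R) : Prop :=
  exists x0 : R,
    (forall x y t, x < x0 -> y < x0 -> 0 <= t <= 1 ->
        G (t * x + (1 - t) * y) <= t * G x + (1 - t) * G y) /\
    (forall x, x < x0 -> exists l, derivable_pt_lim G x l).

(* Main.v *)
Require Import Defs.
From Stdlib Require Import Reals.
From Stdlib Require Import Lra.
Open Scope R_scope.

Lemma cdf_nonneg (G : R -> R) : is_cdf G -> forall x, 0 <= G x.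
Proof.
  intros [Hm [_ [Hl _]]] x.
  destruct (Rle_or_lt 0 (G x)) as [h|h]; [exact h|].
  destruct (Hl (- G x)) as [M HM]; [lra|].
  pose proof (HM (Rmin x M) (Rmin_r x M)) as H1.
  pose proof (Hm (Rmin x M) x (Rmin_l x M)) as H2.
  rewrite Rabs_left in H1 by lra. lra.
Qed.

Lemma cdf_le1 (G : R -> R) : is_cdf G -> forall x, G x <= 1.
Proof.
  intros [Hm [_ [_ Hr]]] x.
  destruct (Rle_or_lt (G x) 1) as [h|h]; [exact h|].
  destruct (Hr (G x - 1)) as [M HM]; [lra|].
  pose proof (HM (Rmax x M) (Rmax_r x M)) as H1.
  pose proof (Hm x (Rmax x M) (Rmax_l x M)) as H2.
  rewrite Rabs_right in H1 by lra. lra.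
Qed.

Lemma ln_le_aux a b : 0 < a -> a <= b -> ln a <= ln b.
Proof.
  intros Ha Hab. destruct (Rle_lt_or_eq_dec a b Hab) as [h|h].
  - left. apply ln_increasing; auto.
  - subst; lra.
Qed.

Theorem lemma5 (Gm Gp : R -> R) :
  llr_cdf_pair Gm Gp ->
  unbounded_signals Gm ->
  left_tail_convex_differentiable Gm ->
  exists x1 : R, forall x y, x1 < x -> x <= y -> u_plus Gm Gp x <= u_plus Gm Gp y.
Proof.
  intros [Hcm [Hcp Hs]] Hu [x0 [Hconv _]].
  pose proof (cdf_nonneg Gm Hcm) as Gm0.
  pose proof (cdf_le1 Gp Hcp) as Gp1.
  destruct Hcm as [Gmmon [_ [Gml Gmr]]].
  destruct Hcp as [Gpmon _].
  destruct (Gml (1/2)) as [M HM]; [lra|].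
  assert (Apos : forall z, 0 < 1 - Gp z).
  { intro z. destruct (Hu z) as [Bz _].
    destruct (Gmr ((1 - Gm z)/2)) as [M' HM']; [lra|].
    set (b := Rmax (z+1) M').
    pose proof (HM' b (Rmax_r _ _)) as H1.
    assert (Hzb : z < b) by (pose proof (Rmax_l (z+1) M'); unfold b in *; lra).
    destruct (Hs z b Hzb) as [H2 _].
    pose proof (Gp1 b) as H3.
    pose proof (exp_pos z) as H4.
    apply Rabs_def2 in H1. destruct H1 as [H1a H1b].
    assert (0 < Gm b - Gm z) by lra.
    assert (0 < exp z * (Gm b - Gm z)) by (apply Rmult_lt_0_compat; lra).
    lra. }
  exists (Rmax (1 - M) (1 - x0)).
  intros x y Hx Hxy.
  pose proof (Rmax_l (1 - M) (1 - x0)). pose proof (Rmax_r (1 - M) (1 - x0)).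
  unfold u_plus, D_plus.
  set (z := - x). set (z' := - y). set (d := y - x).
  set (A := 1 - Gp z). set (B := 1 - Gm z).
  set (A' := 1 - Gp z'). set (B' := 1 - Gm z').
  assert (HA : 0 < A) by apply Apos.
  assert (HA' : 0 < A') by apply Apos.
  assert (HB : 0 < B) by (destruct (Hu z); unfold B; lra).
  assert (HB' : 0 < B') by (destruct (Hu z'); unfold B'; lra).
  assert (Hd : 0 <= d) by (unfold d; lra).
  set (g := Gm (z + 1)).
  assert (Hg : g <= 1/2).
  { pose proof (HM (z+1)) as H1. unfold z in *.
    assert (Habs : Rabs g < 1/2) by (apply H1; lra).
    apply Rabs_def2 in Habs. lra. }
  assert (HGz : Gm z <= g) by (apply Gmmon; lra).
  assert (Hdm0 : 0 <= Gm z - Gm z') by (assert (Gm z' <= Gm z) by (apply Gmmon; unfold z, z'; lra); lra).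
  assert (Hdp0 : 0 <= Gp z - Gp z') by (assert (Gp z' <= Gp z) by (apply Gpmon; unfold z, z'; lra); lra).
  assert (Hconvz : Gm z - Gm z' <= d * g).
  { set (t := 1 / (1 + d)).
    assert (Ht : 0 <= t <= 1).
    { unfold t. split.
      - apply Rlt_le, Rdiv_lt_0_compat; lra.
      - apply (Rmult_le_reg_r (1 + d)); [lra|].
        unfold Rdiv. rewrite Rmult_assoc, Rinv_l by lra. lra. }
    assert (Heq : t * z' + (1 - t) * (z + 1) = z).
    { unfold t, z', z, d. field. unfold d in Hd. lra. }
    pose proof (Hconv z' (z + 1) t) as Hc.
    rewrite Heq in Hc.
    assert (Hc2 : Gm z <= t * Gm z' + (1 - t) * g).
    { apply Hc; unfold z', z in *; [lra|lra|exact Ht]. }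
    assert (Hc3 : (1 + d) * Gm z <= Gm z' + d * g).
    { assert (Htd : t * (1 + d) = 1) by (unfold t; field; lra).
      assert (Hm : (1 + d) * Gm z <= (1 + d) * (t * Gm z' + (1 - t) * g))
        by (apply Rmult_le_compat_l; lra).
      replace ((1 + d) * (t * Gm z' + (1 - t) * g))
        with ((t * (1 + d)) * Gm z' + (1 + d - t * (1 + d)) * g) in Hm by ring.
      rewrite Htd in Hm. lra. }
    pose proof (Gm0 z). 
    assert (0 <= d * Gm z) by (apply Rmult_le_pos; lra).
    lra. }
  assert (Hkey : A * B' <= exp d * A' * B).
  { pose proof (exp_ineq1_le d) as He.
    assert (HBB : B' = B + (Gm z - Gm z')) by (unfold B, B'; ring).
    assert (HAA : A' = A + (Gp z - Gp z')) by (unfold A, A'; ring).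
    rewrite HBB, HAA.
    assert (Hb : g <= B) by (unfold B; lra).
    assert (S1 : (1 + d) * (A * B) <= exp d * (A * B))
      by (apply Rmult_le_compat_r; [apply Rmult_le_pos; lra|lra]).
    assert (S2 : d * (A * g) <= d * (A * B))
      by (apply Rmult_le_compat_l; [lra|apply Rmult_le_compat_l; lra]).
    assert (S3 : A * (Gm z - Gm z') <= A * (d * g))
      by (apply Rmult_le_compat_l; lra).
    assert (S4 : 0 <= exp d * (Gp z - Gp z') * B).
    { pose proof (exp_pos d). apply Rmult_le_pos; [apply Rmult_le_pos|]; lra. }
    assert (E1 : exp d * (A + (Gp z - Gp z')) * B = exp d * (A * B) + exp d * (Gp z - Gp z') * B) by ring.
    rewrite E1.
    assert (E2 : A * (B + (Gm z - Gm z')) = A * B + A * (Gm z - Gm z')) by ring.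
    rewrite E2.
    assert (E3 : A * (d * g) = d * (A * g)) by ring.
    lra. }
  assert (Hratio : A / B <= exp d * (A' / B')).
  { apply (Rmult_le_reg_r (B * B')); [apply Rmult_lt_0_compat; lra|].
    replace (A / B * (B * B')) with (A * B') by (field; lra).
    replace (exp d * (A' / B') * (B * B')) with (exp d * A' * B) by (field; lra).
    exact Hkey. }
  assert (Hpos : 0 < A / B) by (apply Rdiv_lt_0_compat; lra).
  assert (Hpos' : 0 < A' / B') by (apply Rdiv_lt_0_compat; lra).
  pose proof (ln_le_aux _ _ Hpos Hratio) as Hl.
  rewrite ln_mult, ln_exp in Hl by (try apply exp_pos; lra).
  fold A B A' B'. unfold d in Hl. lra.
Qed.
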